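(* Let $n\ge1$ and $c:E_n\to\mathbb{C}$ an admissible edge weighting of $Q_n$. Then there is a unique unital $\ast$-homomorphism $\rho_c: C^\ast(Q_n)\to M_{U_n(c)} = B(\mathbb{C}^{U_n(c)})$ with $\rho_c(p_i) = E_{ii}$ for $i\in U_n(c)$, $\rho_c(p_j) = \big[c(i_1j)\overline{c(i_2j)}\big]_{i_1,i_2\in U_n(c)}$ for $j\in V_n(c)$, and $\rho_c(p_x)=0$ for $x\notin U_n(c)\cup V_n(c)$ (where $c(ij):=0$ if $i,j$ are not adjacent). Moreover, for every $j\in V_n(c)$, $\rho_c(p_j)$ is the projection onto the span of the vector $\psi_j = (c(ij))_{i\in U_n(c)}\in\mathbb{C}^{U_n(c)}$.
   Context: For $n\ge1$, identify integers $0\le i<2^n$ with their $n$-digit binary representations; $i\#k$ is $i$ with its $k$-th digit flipped. The hypercube $Q_n$ has vertex classes $U_n$ (even number of $1$'s) and $V_n$ (odd number of $1$'s), edge set $E_n$ of pairs $ij$ ($i\in U_n$, $j\in V_n$, $j=i\#k$ for some $k<n$); $\mathcal N(x)$ denotes the neighbors of $x$. $C^\ast(Q_n)$ is the universal unital C*-algebra generated by projections $p_x$ ($x\in U_n\cup V_n$) with $\sum_{u\in U_n}p_u=1=\sum_{v\in V_n}p_v$ and $p_up_v=0$ when $u,v$ are non-adjacent. For $c:E_n\to\mathbb{C}$, $Q_n(c) = (U_n(c),V_n(c),E_n(c))$ is the subgraph consisting of the edges with $c(ij)\ne0$ and their endpoints. $c$ is admissible if $\sum_{i\in\mathcal N(j_1)\cap\mathcal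 N(j_2)}c(ij_1)\overline{c(ij_2)}=\delta_{j_1j_2}$ for all $j_1,j_2\in V_n(c)$ and $\sum_{j\in\mathcal N(i_1)\cap\mathcal N(i_2)}c(i_1j)\overline{c(i_2j)}=\delta_{i_1i_2}$ for all $i_1,i_2\in U_n(c)$. $E_{ii}$ are the standard matrix units. *)

(* Defs.v *)
From HB Require Import structures.
From mathcomp Require Import all_boot all_order all_algebra.
Set Implicit Arguments. Unset Strict Implicit. Unset Printing Implicit Defensive.
Import Order.TTheory GRing.Theory Num.Theory.
Local Open Scope ring_scope.

Definition vertex (n : nat) := {ffun 'I_n -> bool}.

Definition flip n (x : vertex n) (k : 'I_n) : vertex n :=
  [ffun l => if l == k then ~~ x l else x l].

Definition adj n (x y : vertex n) : bool := [exists k, y == flip x k].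

Definition Un n : {set vertex n} := [set x : vertex n | ~~ odd #|[set k | x k]|].
Definition Vn n : {set vertex n} := [set x : vertex n | odd #|[set k | x k]|].

Definition is_edge n (e : vertex n * vertex n) : bool :=
  [&& e.1 \in Un n, e.2 \in Vn n & adj e.1 e.2].
Definition edge n := {e : vertex n * vertex n | is_edge e}.

Definition nbhd n (x : vertex n) : {set vertex n} := [set y | adj x y].

Section Weights.
Variables (C : numClosedFieldType) (n : nat) (c : edge n -> C).

(* c(ij), extended by 0 on non-edges *)
Definition cw (i j : vertex n) : C :=
  match insub (i, j) : option (edge n) with Some e => c e | None => 0 end.

Definition Uc : {set vertex n} := [set i in Un n | [exists j, cw i j != 0]].
Definition Vc : {set vertex n} := [set j in Vn n | [exists i, cw i j != 0]].

Definition admissible : Prop :=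
  (forall j1 j2, j1 \in Vc -> j2 \in Vc ->
     \sum_(i in nbhd j1 :&: nbhd j2) cw i j1 * (cw i j2)^* = (j1 == j2)%:R) /\
  (forall i1 i2, i1 \in Uc -> i2 \in Uc ->
     \sum_(j in nbhd i1 :&: nbhd i2) cw i1 j * (cw i2 j)^* = (i1 == i2)%:R).

(* enumeration of U_n(c), indexing the matrix algebra M_{U_n(c)} *)
Definition mU := #|Uc|.
Definition idx (a : 'I_mU) : vertex n := enum_val a.

Definition Eii (i : vertex n) : 'M[C]_mU :=
  \matrix_(a, b) ((idx a == i) && (idx b == i))%:R.

Definition Pj (j : vertex n) : 'M[C]_mU :=
  \matrix_(a, b) (cw (idx a) j * (cw (idx b) j)^*).

Definition psi (j : vertex n) : 'cV[C]_mU := \col_a cw (idx a) j.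

End Weights.

Definition adjmx (C : numClosedFieldType) m (M : 'M[C]_m) : 'M[C]_m :=
  (map_mx Num.conj M)^T.

Definition proj_onto_span (C : numClosedFieldType) m (P : 'M[C]_m) (v : 'cV[C]_m) : Prop :=
  P *m P = P /\ adjmx P = P /\ (P^T == v^T)%MS.

Definition star_axioms (C : numClosedFieldType) (A : lalgType C) (star : A -> A) : Prop :=
  [/\ forall x, star (star x) = x,
      forall x y, star (x + y) = star x + star y,
      forall (a : C) x, star (a *: x) = a^* *: star x
    & forall x y, star (x * y) = star y * star x].

Definition unital_star_hom (C : numClosedFieldType) (A : lalgType C) (star : A -> A)
  m (phi : A -> 'M[C]_m) : Prop :=
  [/\ forall x y, phi (x + y) = phi x + phi y,
      forall (a : C) x, phi (a *: x) = a *: phi x,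
      forall x y, phi (x * y) = phi x *m phi y,
      phi 1 = 1%:M
    & forall x, phi (star x) = adjmx (phi x)].

Definition Qn_relations (C : numClosedFieldType) n (A : lalgType C) (star : A -> A)
  (p : vertex n -> A) : Prop :=
  [/\ forall x, p x * p x = p x /\ star (p x) = p x,
      \sum_(u in Un n) p u = 1,
      \sum_(v in Vn n) p v = 1
    & forall u v, u \in Un n -> v \in Vn n -> ~~ adj u v -> p u * p v = 0].

(* Universal property of (A, star, p) as C*(Q_n), tested against the
   matrix C*-algebras M_m(C) (the only targets occurring in the statement). *)
Definition Qn_universal (C : numClosedFieldType) n (A : lalgType C) (star : A -> A)
  (p : vertex n -> A) : Prop :=
  forall m (P : vertex n -> 'M[C]_m),
    [/\ forall x, P x *m P x = P x /\ adjmx (P x) = P x,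
        \sum_(u in Un n) P u = 1%:M,
        \sum_(v in Vn n) P v = 1%:M
      & forall u v, u \in Un n -> v \in Vn n -> ~~ adj u v -> P u *m P v = 0] ->
    exists! phi : A -> 'M[C]_m,
      unital_star_hom star phi /\ forall x, phi (p x) = P x.

(* Main.v *)
Require Import Defs.
From HB Require Import structures.
From mathcomp Require Import all_boot all_order all_algebra.
From mathcomp Require Import ring.
Import Order.TTheory GRing.Theory Num.Theory.
Local Open Scope ring_scope.

Section H.
Variables (C : numClosedFieldType) (n : nat) (c : edge n -> C).

Lemma flipK (x : vertex n) k : flip (flip x k) k = x.
Proof. by apply/ffunP => l; rewrite !ffunE; case: eqP => // ->; rewrite negbK. Qed.

Lemma adj_sym (x y : vertex n) : adj x y = adj y x.
Proof.
suff H : forall a b : vertex n, adj a b -> adj b a.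
  by apply/idP/idP; apply: H.
move=> a b /existsP [k /eqP ->]; apply/existsP; exists k; by rewrite flipK.
Qed.

Lemma cw_edge {i j} : cw c i j != 0 -> is_edge (i, j).
Proof. rewrite /cw; case: insubP => [e He _|]; first by []. by rewrite eqxx. Qed.

Lemma cw_Uc {i j} : cw c i j != 0 -> i \in Uc c.
Proof.
move=> H; have := cw_edge H; case/and3P => /= Hi _ _.
by rewrite inE Hi /=; apply/existsP; exists j.
Qed.

Lemma cw_Vc {i j} : cw c i j != 0 -> j \in Vc c.
Proof.
move=> H; have := cw_edge H; case/and3P => /= _ Hj _.
by rewrite inE Hj /=; apply/existsP; exists i.
Qed.

Lemma cw_adj {i j} : cw c i j != 0 -> adj i j.
Proof. by move=> H; have := cw_edge H; case/and3P. Qed.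

Lemma sum_restr (R : nmodType) (T : finType) (S : {set T}) (F : T -> R) :
  (forall x, x \notin S -> F x = 0) -> \sum_(x in S) F x = \sum_x F x.
Proof.
move=> H; rewrite big_mkcond /=; apply: eq_bigr => x _.
by case: ifP => // /negbT /H ->.
Qed.

Lemma UcVc x : x \in Uc c -> x \notin Vc c.
Proof. by rewrite !inE => /andP [/negPf -> _]. Qed.

Lemma sumV j1 j2 : \sum_(i in nbhd j1 :&: nbhd j2) cw c i j1 * (cw c i j2)^*
  = \sum_(a < mU c) cw c (idx a) j1 * (cw c (idx a) j2)^*.
Proof.
rewrite sum_restr; last first.
  move=> x; rewrite !inE negb_and => Hx.
  case: (eqVneq (cw c x j1) 0) => [->|H1]; first by rewrite mul0r.
  case: (eqVneq (cw c x j2) 0) => [->|H2]; first by rewrite conjC0 mulr0.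
  by move: Hx; rewrite -!(adj_sym x) (cw_adj H1) (cw_adj H2).
rewrite -(@sum_restr _ _ (Uc c)); last first.
  move=> x Hx; case: (eqVneq (cw c x j1) 0) => [->|H1]; first by rewrite mul0r.
  by rewrite (cw_Uc H1) in Hx.
by rewrite big_enum_val.
Qed.

Lemma sumU i1 i2 : \sum_(j in nbhd i1 :&: nbhd i2) cw c i1 j * (cw c i2 j)^*
  = \sum_(j in Vc c) cw c i1 j * (cw c i2 j)^*.
Proof.
rewrite sum_restr; last first.
  move=> x; rewrite !inE negb_and => Hx.
  case: (eqVneq (cw c i1 x) 0) => [->|H1]; first by rewrite mul0r.
  case: (eqVneq (cw c i2 x) 0) => [->|H2]; first by rewrite conjC0 mulr0.
  by move: Hx; rewrite (cw_adj H1) (cw_adj H2).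
rewrite sum_restr //.
move=> x Hx; case: (eqVneq (cw c i1 x) 0) => [->|H1]; first by rewrite mul0r.
by rewrite (cw_Vc H1) in Hx.
Qed.


Hypothesis hc : admissible c.

Lemma norm1 j : j \in Vc c ->
  \sum_(a < mU c) cw c (idx a) j * (cw c (idx a) j)^* = 1.
Proof. by move=> Hj; rewrite -sumV hc.1 // eqxx. Qed.

Lemma idxU (a : 'I_(mU c)) : idx a \in Uc c.
Proof. exact: enum_valP. Qed.

Lemma idx_eq (a b : 'I_(mU c)) : (idx a == idx b) = (a == b).
Proof. exact: (inj_eq enum_val_inj). Qed.

Lemma orthU (a b : 'I_(mU c)) :
  \sum_(j in Vc c) cw c (idx a) j * (cw c (idx b) j)^* = (a == b)%:R.
Proof. by rewrite -sumU hc.2 ?idxU // idx_eq. Qed.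

Lemma PjP j : j \in Vc c -> Pj c j *m Pj c j = Pj c j.
Proof.
move=> Hj; apply/matrixP => a b; rewrite !mxE.
transitivity (cw c (idx a) j * (cw c (idx b) j)^* *
   \sum_(k < mU c) cw c (idx k) j * (cw c (idx k) j)^*); last by rewrite norm1 // mulr1.
rewrite mulr_sumr; apply: eq_bigr => k _; rewrite !mxE.
ring.
Qed.

Lemma PjA j : adjmx (Pj c j) = Pj c j.
Proof. by apply/matrixP => a b; rewrite !mxE rmorphM /= conjCK mulrC. Qed.

Lemma Eii_delta x (Hx : x \in Uc c) : Eii c x = delta_mx (enum_rank_in Hx x) (enum_rank_in Hx x).
Proof.
apply/matrixP => a b; rewrite !mxE.
have E : x = idx (enum_rank_in Hx x) by rewrite /idx enum_rankK_in.
by rewrite {1 2}E !idx_eq.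
Qed.

Lemma UcVc' x : x \in Vc c -> x \notin Uc c.
Proof. by apply: contraL => /UcVc. Qed.

End H.

Theorem proposition4p4 (C : numClosedFieldType) (n : nat) (hn : (0 < n)%N)
  (A : lalgType C) (star : A -> A) (p : vertex n -> A)
  (hstar : star_axioms star) (hrel : Qn_relations star p)
  (huniv : Qn_universal star p)
  (c : edge n -> C) (hc : admissible c) :
  (exists! rho : A -> 'M[C]_(mU c),
     [/\ unital_star_hom star rho,
         forall i, i \in Uc c -> rho (p i) = Eii c i,
         forall j, j \in Vc c -> rho (p j) = Pj c j
       & forall x, x \notin Uc c :|: Vc c -> rho (p x) = 0]) /\
  (forall j, j \in Vc c -> proj_onto_span (Pj c j) (psi c j)).
Proof.
split; last first.
  move=> j Hj; split; first exact: PjP.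
  split; first exact: PjA.
  pose w : 'cV[C]_(mU c) := \col_a (cw c (idx a) j)^*.
  have E : (Pj c j)^T = w *m (psi c j)^T.
    by apply/matrixP => a b; rewrite !mxE big_ord1 !mxE mulrC.
  apply/andP; split; first by rewrite E submxMl.
  have -> : (psi c j)^T = (psi c j)^T *m (Pj c j)^T.
    rewrite E mulmxA.
    have -> : (psi c j)^T *m w = 1%:M.
      apply/matrixP => a b; rewrite !mxE !ord1 eqxx -(@norm1 _ _ _ hc _ Hj).
      by apply: eq_bigr => k _; rewrite !mxE.
    by rewrite mul1mx.
  exact: submxMl.
pose P x := if x \in Uc c then Eii c x else if x \in Vc c then Pj c x else 0.
have PU x : x \in Un n -> P x = if x \in Uc c then Eii c x else 0.
  move=> Hx; rewrite /P; case: ifP => // _.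
  by rewrite [x \in Vc c]inE [x \in Vn n]inE; move: Hx; rewrite inE => /negbTE ->.
have PV x : x \in Vn n -> P x = if x \in Vc c then Pj c x else 0.
  move=> Hx; rewrite /P; case: ifP => // HU.
  by move: HU; rewrite !inE; move: Hx; rewrite inE => ->.
have HP : [/\ forall x, P x *m P x = P x /\ adjmx (P x) = P x,
        \sum_(u in Un n) P u = 1%:M,
        \sum_(v in Vn n) P v = 1%:M
      & forall u v, u \in Un n -> v \in Vn n -> ~~ adj u v -> P u *m P v = 0].
  split.
  - move=> x; rewrite /P; case: ifP => [Hx|_].
      rewrite (@Eii_delta _ _ _ _ Hx) mul_delta_mx; split => //.
      by apply/matrixP => a b; rewrite !mxE conjC_nat andbC.
    case: ifP => [Hx|_]; first by split; [exact: PjP | exact: PjA].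
    split; first by rewrite mul0mx.
    by apply/matrixP => a b; rewrite !mxE conjC0.
  - rewrite (eq_bigr _ PU) -big_mkcondr /=.
    rewrite (eq_bigl (fun u => u \in Uc c)); last first.
      by move=> u; rewrite andb_idl // inE => /andP [].
    apply/matrixP => a b; rewrite summxE (bigD1 (idx a)) ?idxU //= big1.
      by rewrite !mxE eqxx /= eq_sym idx_eq addr0.
    by move=> u /andP [_ Hu]; rewrite mxE eq_sym (negbTE Hu).
  - rewrite (eq_bigr _ PV) -big_mkcondr /=.
    rewrite (eq_bigl (fun u => u \in Vc c)); last first.
      by move=> u; rewrite andb_idl // inE => /andP [].
    apply/matrixP => a b; rewrite summxE mxE -(@orthU _ _ _ hc).
    by apply: eq_bigr => j _; rewrite mxE.
  - move=> u v Hu Hv Huv; rewrite PU // PV //.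
    case: ifP => _; last by rewrite mul0mx.
    case: ifP => _; last by rewrite mulmx0.
    apply/matrixP => a b; rewrite !mxE big1 // => k _; rewrite !mxE.
    case: (eqVneq (idx k) u) => [->|]; last by rewrite andbF mul0r.
    case: (eqVneq (cw c u v) 0) => [->|H]; first by rewrite mul0r mulr0.
    by rewrite (@cw_adj _ _ _ _ _ H) in Huv.
have [phi [[Hphi Hp] Huniq]] := huniv _ _ HP.
have PUc i : i \in Uc c -> P i = Eii c i by rewrite /P => ->.
have PVc j : j \in Vc c -> P j = Pj c j.
  by move=> Hj; rewrite /P (negbTE (@UcVc' _ _ _ _ Hj)) Hj.
have P0 x : x \notin Uc c :|: Vc c -> P x = 0.
  by rewrite inE negb_or /P => /andP [/negbTE -> /negbTE ->].
exists phi; split.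
  split => //.
  - by move=> i Hi; rewrite Hp PUc.
  - by move=> j Hj; rewrite Hp PVc.
  - by move=> x Hx; rewrite Hp P0.
move=> rho [Hrho H1 H2 H3]; apply: Huniq; split => // x.
case: (boolP (x \in Uc c)) => [Hx|Hx]; first by rewrite H1 // PUc.
case: (boolP (x \in Vc c)) => [Hy|Hy]; first by rewrite H2 // PVc.
by rewrite H3 ?P0 // inE negb_or Hx Hy.
Qed.
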